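(* Let $l\subset[0,1]$ be a compact set that is super sparse near every $a\in l$. Then the modified Assouad dimension of $l$ is $0$. The converse fails in general (e.g. $\{0\}\cup\{2^{-k}:k\ge1\}$ has modified Assouad dimension $0$ but is not sparse near $0$).
   Context: For a compact set $l\subset\mathbb{R}$ let $W(l)=\{k\in\mathbb{N}: l\cap([2^{-k-1},2^{-k}]\cup[-2^{-k},-2^{-k-1}])\neq\emptyset\}$, and for $a\in l$ let $W(l,a)=W(l-a)$; $l$ is super sparse near $a$ if $W(l,a)$ has upper Banach density $\limsup_{N\to\infty}\sup_{k\in\mathbb{N}}\#(W(l,a)\cap[k+1,k+N])/N=0$, and sparse near $a$ if its upper natural density is $0$. The Assouad dimension $\dim_{\mathrm A}F$ is the infimum of $s\ge0$ such that there is $C>0$ with $N(B(x,R)\cap F,r)\le C(R/r)^s$ for all $0<r<R$ and $x\in F$ ($N(E,r)$ = minimal number of $r$-intervals covering $E$). The modified Assouad dimension is $\inf\{\sup_i\dim_{\mathrm A}F_i: F\subset\bigcup_{i\in\mathbb{N}}F_i\}$. *)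

(* Defs.v *)
From Stdlib Require Import Reals Lra List Classical ClassicalEpsilon.
Open Scope R_scope.

Definition W (l : R -> Prop) (a : R) (k : nat) : Prop :=
  exists y, l y /\ (/2) ^ (S k) <= Rabs (y - a) <= (/2) ^ k.

Definition ind (P : Prop) : R :=
  if excluded_middle_informative P then 1 else 0.

(* #(A ∩ [k+1, k+N]) *)
Fixpoint countW (A : nat -> Prop) (k N : nat) : R :=
  match N with
  | O => 0
  | S N' => countW A k N' + ind (A (k + N)%nat)
  end.

(* upper Banach density 0:
   limsup_{N->oo} sup_k #(A ∩ [k+1,k+N])/N = 0  (quantities are >= 0) *)
Definition upper_banach_density_zero (A : nat -> Prop) : Prop :=
  forall eps, 0 < eps -> exists N0 : nat, forall N k : nat, (N0 <= N)%nat ->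
    (0 < N)%nat -> countW A k N / INR N <= eps.

Definition upper_natural_density_zero (A : nat -> Prop) : Prop :=
  forall eps, 0 < eps -> exists N0 : nat, forall N : nat, (N0 <= N)%nat ->
    (0 < N)%nat -> countW A 0 N / INR N <= eps.

Definition super_sparse_near (l : R -> Prop) (a : R) : Prop :=
  upper_banach_density_zero (W l a).

Definition sparse_near (l : R -> Prop) (a : R) : Prop :=
  upper_natural_density_zero (W l a).

Definition covers (E : R -> Prop) (r : R) (n : nat) : Prop :=
  exists xs : list R, length xs = n /\
    forall y, E y -> exists x, In x xs /\ x <= y <= x + r.

(* s is admissible in the definition of the Assouad dimension of F:
   N(B(x,R) ∩ F, r) <= C (R/r)^s for all 0<r<R, x in F *)
Definition assouad_admissible (F : R -> Prop) (s : R) : Prop :=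
  0 <= s /\ exists C, 0 < C /\
    forall x r Rr, F x -> 0 < r -> r < Rr ->
      exists n, covers (fun y => F y /\ Rabs (y - x) <= Rr) r n /\
                INR n <= C * Rpower (Rr / r) s.

Definition is_glb (S : R -> Prop) (m : R) : Prop :=
  (forall x, S x -> m <= x) /\
  (forall m', (forall x, S x -> m' <= x) -> m' <= m).

(* dim_A F = d  (for F ⊆ R this infimum is always a real number in [0,1]) *)
Definition assouad_dim (F : R -> Prop) (d : R) : Prop :=
  is_glb (assouad_admissible F) d.

(* modified Assouad dimension of F equals d:
   d = inf { sup_i dim_A F_i : F ⊆ ⋃_i F_i } *)
Definition mod_assouad_dim (F : R -> Prop) (d : R) : Prop :=
  is_glb (fun t => exists Fi : nat -> R -> Prop,
             (forall x, F x -> exists i, Fi i x) /\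
             is_lub (fun u => exists i, assouad_dim (Fi i) u) t) d.

Definition dyadic_set (x : R) : Prop :=
  x = 0 \/ exists k : nat, (1 <= k)%nat /\ x = (/2) ^ k.

(* Main.v *)
Require Import Defs.
From Stdlib Require Import Reals Lra Lia List Classical ClassicalEpsilon.
Import ListNotations.
Open Scope R_scope.


Fixpoint cnt (A : nat -> Prop) (j n : nat) : nat :=
  match n with
  | O => O
  | S n' => (cnt A j n' + (if excluded_middle_informative (A (j + n')%nat) then 1 else 0))%nat
  end.

Lemma countW_cnt A k N : countW A k N = INR (cnt A (S k) N).
Proof.
  induction N as [|N IH]; simpl. reflexivity.
  rewrite IH, plus_INR. unfold Defs.ind.
  replace (k + S N)%nat with (S k + N)%nat by lia.
  replace (S k + N)%nat with (S (k + N)) by lia.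
  destruct (excluded_middle_informative (A (S (k + N)))); simpl; lra.
Qed.

Lemma cnt_split A j a b : cnt A j (a + b) = (cnt A j a + cnt A (j + a) b)%nat.
Proof.
  induction b as [|b IH]. rewrite Nat.add_0_r. simpl. lia.
  replace (a + S b)%nat with (S (a + b)) by lia. simpl.
  rewrite IH. replace (j + (a + b))%nat with (j + a + b)%nat by lia. lia.
Qed.

Lemma cnt_one A j : A j -> cnt A j 1 = 1%nat.
Proof.
  intro H. simpl. rewrite Nat.add_0_r.
  destruct (excluded_middle_informative (A j)); [reflexivity| contradiction].
Qed.

Lemma cnt_le1 A j : (cnt A j 1 <= 1)%nat.
Proof. simpl. destruct (excluded_middle_informative _); lia. Qed.

Lemma cnt_level A j m k : A (j + m)%nat ->
  (S (cnt A (S (j + m)) k) <= cnt A j (S m + k))%nat.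
Proof.
  intro H. replace (S m + k)%nat with (m + (1 + k))%nat by lia.
  rewrite cnt_split, cnt_split, cnt_one by exact H.
  replace (j + m + 1)%nat with (S (j + m)) by lia. lia.
Qed.

Lemma cnt_mono A j a b : (a <= b)%nat -> (cnt A j a <= cnt A j b)%nat.
Proof.
  intro H. replace b with (a + (b - a))%nat by lia. rewrite cnt_split. lia.
Qed.

Lemma cnt_shift A j n : (cnt A j n <= 1 + cnt A (S j) n)%nat.
Proof.
  apply Nat.le_trans with (cnt A j (1 + n)). apply cnt_mono; lia.
  rewrite cnt_split. pose proof (cnt_le1 A j).
  replace (j + 1)%nat with (S j) by lia. lia.
Qed.

Lemma level_exists : forall n j d, (/2)^(j+n) < d <= (/2)^j ->
  exists i, (j <= i < j + n)%nat /\ (/2)^(S i) < d <= (/2)^i.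
Proof.
  induction n as [|n IH]; intros j d [H1 H2].
  - rewrite Nat.add_0_r in H1. lra.
  - destruct (Rlt_le_dec ((/2)^(S j)) d) as [h|h].
    + exists j. split. lia. lra.
    + destruct (IH (S j) d) as [i [Hi1 Hi2]].
      { replace (S j + n)%nat with (j + S n)%nat by lia. lra. }
      exists i. split. lia. exact Hi2.
Qed.

Lemma half_pow_S i : (/2)^(S i) = (/2)^i / 2.
Proof. simpl. lra. Qed.

Lemma half_pos i : 0 < (/2)^i.
Proof. apply pow_lt. lra. Qed.

Lemma W_of_level l p q i : l p -> (/2)^(S i) < Rabs (q - p) <= (/2)^i -> W l q i.
Proof.
  intros hp [h1 h2]. exists p. split. exact hp. rewrite Rabs_minus_sym. lra.
Qed.

Lemma core (l : R -> Prop) (x : R) (hx : 0 < x <= 1) :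
  forall n j b p, l p -> exists xs : list R,
    INR (length xs) <= 2 * (/x)^b * (1 + 2*x)^n /\
    forall q, l q -> Rabs (q - p) <= (/2)^j -> (cnt (W l q) j n <= b)%nat ->
      exists z, In z xs /\ z <= q <= z + (/2)^(j+n).
Proof.
  intro n. induction n as [n IHn] using (well_founded_induction Nat.lt_wf_0).
  intros j b p hp.
  set (r0 := (/2)^(j+n)).
  assert (hr0 : 0 < r0) by apply half_pos.
  assert (hQ : 1 <= (1 + 2*x)^n) by (apply pow_R1_Rle; lra).
  assert (hxi : 1 <= /x). { rewrite <- Rinv_1. apply Rinv_le_contravar; lra. }
  assert (base : forall q, Rabs (q - p) <= r0 -> exists z, In z [p - r0; p] /\ z <= q <= z + r0).
  { intros q hq. destruct (Rle_dec p q).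
    - exists p. split. simpl; auto. rewrite Rabs_right in hq by lra. lra.
    - exists (p - r0). split. simpl; auto. rewrite Rabs_left in hq by lra. lra. }
  destruct b as [|b'].
  - exists [p - r0; p]. split.
    + simpl length. simpl pow. replace (INR 2) with 2 by (simpl; lra). rewrite Rmult_1_r. generalize hQ. generalize ((1 + 2 * x) ^ n). intros. lra.
    + intros q hq hqp hc.
      destruct (Rle_dec (Rabs (q - p)) r0) as [h|h]. now apply base.
      exfalso. destruct (level_exists n j (Rabs (q-p))) as [i [Hi Hl]]. { split; [apply Rnot_le_lt in h; exact h|exact hqp]. }
      pose proof (W_of_level l p q i hp Hl) as hW.
      pose proof (cnt_level (W l q) j (i - j) (n - S (i - j))) as HC.
      replace (j + (i - j))%nat with i in HC by lia.
      replace (S (i - j) + (n - S (i - j)))%nat with n in HC by lia.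
      specialize (HC hW). lia.
  - assert (aux : forall m k, (m + k = n)%nat -> exists ys : list R,
      INR (length ys) <= 2 * (/x)^b' * ((1 + 2*x)^(m+k) - (1 + 2*x)^k) / x /\
      forall q, l q -> Rabs (q - p) <= (/2)^j -> (cnt (W l q) j n <= S b')%nat ->
        (exists i, (j <= i < j + m)%nat /\ (/2)^(S i) < Rabs (q - p) <= (/2)^i) ->
        exists z, In z ys /\ z <= q <= z + r0).
    { induction m as [|m IHm]; intros k hmk.
      - exists nil. split.
        + simpl length. simpl plus. replace ((1 + 2 * x) ^ k - (1 + 2 * x) ^ k) with 0 by ring.
          simpl INR. unfold Rdiv. rewrite Rmult_0_r, Rmult_0_l. lra.
        + intros q _ _ _ [i [Hi _]]. lia.
      - destruct (IHm (S k)) as [ys [Hys Cys]]. lia.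
        assert (grp : forall s : R, (s = 1 \/ s = -1) -> exists ys1 : list R,
          INR (length ys1) <= 2 * (/x)^b' * (1 + 2*x)^k /\
          forall q, l q -> Rabs (q - p) <= (/2)^j -> (cnt (W l q) j n <= S b')%nat ->
            (/2)^(S (j+m)) < s * (q - p) <= (/2)^(j+m) ->
            exists z, In z ys1 /\ z <= q <= z + r0).
        { intros s hs.
          assert (hPk : 0 <= 2 * (/x)^b' * (1 + 2*x)^k).
          { apply Rmult_le_pos. apply Rmult_le_pos. lra. apply pow_le; lra. apply pow_le; lra. }
          destruct (classic (exists q0, l q0 /\ Rabs (q0 - p) <= (/2)^j /\ (cnt (W l q0) j n <= S b')%nat /\
              (/2)^(S (j+m)) < s * (q0 - p) <= (/2)^(j+m))) as [[q0 [hq0 [_ [_ hq0s]]]] | hne].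
          - destruct (IHn k ltac:(lia) (S (j + m)) b' q0 hq0) as [ys1 [H1 C1]].
            exists ys1. split. exact H1.
            intros q hq hqp hc hqs.
            destruct (C1 q hq) as [z [hz1 hz2]].
            + rewrite half_pow_S in hqs, hq0s |- *.
              apply Rabs_le. destruct hs; subst s; lra.
            + assert (hl : (/2)^(S (j+m)) < Rabs (q - p) <= (/2)^(j+m)).
              { destruct hs; subst s.
                - rewrite Rabs_right; pose proof (half_pos (S (j+m))); lra.
                - rewrite Rabs_left; pose proof (half_pos (S (j+m))); lra. }
              pose proof (cnt_level (W l q) j m k (W_of_level l p q (j+m) hp hl)) as HC.
              rewrite hmk in HC. lia.
            + exists z. split. exact hz1. unfold r0.
              replace (j + n)%nat with (S (j + m) + k)%nat by lia. exact hz2.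
          - exists nil. split. simpl. exact hPk.
            intros q hq hqp hc hqs. exfalso. apply hne. exists q. auto. }
        destruct (grp 1 (or_introl eq_refl)) as [ys1 [H1 C1]].
        destruct (grp (-1) (or_intror eq_refl)) as [ys2 [H2 C2]].
        exists (ys ++ ys1 ++ ys2). split.
        + rewrite !length_app, !plus_INR.
          replace (m + S k)%nat with (S m + k)%nat in Hys by lia.
          assert (E : ((1 + 2*x)^(S m + k) - (1 + 2*x)^k) / x =
                      ((1 + 2*x)^(S m + k) - (1 + 2*x)^(S k)) / x + 2 * (1 + 2*x)^k).
          { simpl ((1 + 2*x)^(S k)). field. lra. }
          assert (E2 : 2 * (/ x) ^ b' * ((1 + 2 * x) ^ (S m + k) - (1 + 2 * x) ^ k) / x =
             2 * (/ x) ^ b' * (((1 + 2 * x) ^ (S m + k) - (1 + 2 * x) ^ k) / x)) by (unfold Rdiv; ring).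
          assert (E3 : 2 * (/ x) ^ b' * ((1 + 2 * x) ^ (S m + k) - (1 + 2 * x) ^ (S k)) / x =
             2 * (/ x) ^ b' * (((1 + 2 * x) ^ (S m + k) - (1 + 2 * x) ^ (S k)) / x)) by (unfold Rdiv; ring).
          rewrite E2, E. rewrite E3 in Hys.
          generalize dependent (((1 + 2 * x) ^ (S m + k) - (1 + 2 * x) ^ S k) / x).
          intros. 
          generalize dependent ((/ x) ^ b'). generalize dependent ((1 + 2 * x) ^ k). intros. lra.
        + intros q hq hqp hc [i [Hi Hl]].
          destruct (Nat.lt_ge_cases i (j + m)) as [hi|hi].
          * destruct (Cys q hq hqp hc) as [z [hz1 hz2]]. exists i. split. lia. exact Hl.
            exists z. split. apply in_or_app. now left. exact hz2.
          * assert (i = j + m)%nat by lia. subst i.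
            destruct (Rle_dec p q).
            -- rewrite Rabs_right in Hl by lra.
               destruct (C1 q hq hqp hc) as [z [hz1 hz2]]. lra.
               exists z. split. apply in_or_app. right. apply in_or_app. now left. exact hz2.
            -- rewrite Rabs_left in Hl by lra.
               destruct (C2 q hq hqp hc) as [z [hz1 hz2]]. lra.
               exists z. split. apply in_or_app. right. apply in_or_app. now right. exact hz2. }
    destruct (aux n 0%nat ltac:(lia)) as [ys [Hys Cys]].
    exists ([p - r0; p] ++ ys). split.
    + rewrite length_app, plus_INR. replace (INR (length [p - r0; p])) with 2 by (simpl; lra).
      rewrite Nat.add_0_r in Hys. simpl ((1 + 2*x)^0) in Hys. simpl ((/x)^(S b')).
      assert (hP : 1 <= (/x)^b') by (apply pow_R1_Rle; lra).
      assert (E : 2 * (/ x) ^ b' * ((1 + 2 * x) ^ n - 1) / x = 2 * (/ x) ^ b' * ((1 + 2 * x) ^ n - 1) * /x) by reflexivity.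
      rewrite E in Hys. nra.
    + intros q hq hqp hc.
      destruct (Rle_dec (Rabs (q - p)) r0) as [h|h].
      * destruct (base q h) as [z [hz1 hz2]]. exists z. split. apply in_or_app. now left. exact hz2.
      * destruct (level_exists n j (Rabs (q-p))) as [i [Hi Hl]]. { split; [apply Rnot_le_lt in h; exact h|exact hqp]. }
        destruct (Cys q hq hqp hc) as [z [hz1 hz2]]. exists i. split; [lia|exact Hl].
        exists z. split. apply in_or_app. now right. exact hz2.
Qed.

Lemma exp_le_mono a c : a <= c -> exp a <= exp c.
Proof. intro h. destruct (Rle_lt_or_eq_dec a c h). left; now apply exp_increasing. subst; lra. Qed.

Lemma ln_le_mono a c : 0 < a -> a <= c -> ln a <= ln c.
Proof. intros h1 h2. destruct (Rle_lt_or_eq_dec a c h2). left; now apply ln_increasing. subst; lra. Qed.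

Lemma ln_ge0 a : 1 <= a -> 0 <= ln a.
Proof. intro h. rewrite <- ln_1. apply ln_le_mono; lra. Qed.

Lemma ln1p_le u : 0 <= u -> ln (1 + u) <= u.
Proof. intro h. rewrite <- (ln_exp u) at 2. apply ln_le_mono. lra. apply exp_ineq1_le. Qed.

Lemma fin_ineq (x d r R : R) (M N0 n b : nat) :
  0 < x <= 1 -> 0 < d -> ln (1 + 2*x) <= d * ln 2 / 2 -> (0 < M)%nat ->
  ln (/x) / INR M <= d * ln 2 / 2 -> 0 < r -> r < R -> 2^n * r <= 4 * R ->
  INR b <= 1 + INR (n + N0 + 1) / INR M ->
  2 * (/x)^b * (1 + 2*x)^n <=
  exp (ln 2 + (1 + INR (N0 + 1) / INR M) * ln (/x) + d * ln 4) * Rpower (R / r) d.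
Proof.
  intros hx hd h1 hM h2 hr hrR h4 hb.
  assert (hxi : 1 <= /x). { rewrite <- Rinv_1. apply Rinv_le_contravar; lra. }
  set (L := ln (/x)).
  assert (hL : 0 <= L) by (apply ln_ge0; lra).
  assert (hMp : 0 < INR M) by (apply lt_0_INR; lia).
  assert (E1 : (/x)^b = exp (INR b * L)).
  { rewrite <- Rpower_pow by lra. reflexivity. }
  assert (E2 : (1 + 2*x)^n = exp (INR n * ln (1 + 2*x))).
  { rewrite <- Rpower_pow by lra. reflexivity. }
  rewrite E1, E2. unfold Rpower.
  rewrite <- (exp_ln 2) at 1 by lra.
  rewrite <- !exp_plus. apply exp_le_mono.
  assert (A1 : INR b * L <= (1 + INR (n + N0 + 1) / INR M) * L) by (apply Rmult_le_compat_r; lra).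
  assert (E3 : INR (n + N0 + 1) / INR M = INR n / INR M + INR (N0 + 1) / INR M).
  { rewrite !plus_INR. field. lra. }
  rewrite E3 in A1.
  assert (A2 : INR n / INR M * L <= INR n * (d * ln 2 / 2)).
  { replace (INR n / INR M * L) with (INR n * (L / INR M)) by (field; lra).
    apply Rmult_le_compat_l. apply pos_INR. exact h2. }
  assert (A3 : INR n * ln (1 + 2*x) <= INR n * (d * ln 2 / 2)).
  { apply Rmult_le_compat_l. apply pos_INR. exact h1. }
  assert (A4 : INR n * ln 2 <= ln 4 + ln (R / r)).
  { rewrite <- ln_pow by lra. rewrite <- ln_mult.
    apply ln_le_mono. apply pow_lt; lra.
    apply Rmult_le_reg_r with r. exact hr.
    replace (4 * (R / r) * r) with (4 * R) by (field; lra). exact h4.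
    lra. apply Rdiv_lt_0_compat; lra. }
  assert (A5 : d * (INR n * ln 2) <= d * (ln 4 + ln (R / r))) by (apply Rmult_le_compat_l; lra).
  assert (A6 : (1 + (INR n / INR M + INR (N0 + 1) / INR M)) * L =
     L + INR n / INR M * L + INR (N0 + 1) / INR M * L) by ring.
  rewrite A6 in A1.
  assert (A7 : INR n * (d * ln 2 / 2) + INR n * (d * ln 2 / 2) = d * (INR n * ln 2)) by field.
  lra.
Qed.

Definition piece (l : R -> Prop) (M N0 : nat) (a : R) : Prop :=
  l a /\ forall N k, (N0 <= N)%nat -> (0 < N)%nat -> countW (W l a) k N / INR N <= / INR M.

Lemma two_pow_ge n : INR (S n) <= 2 ^ n.
Proof. induction n. simpl; lra. rewrite (S_INR (S n)). pose proof (pow_R1_Rle 2 n ltac:(lra)). simpl (2 ^ S n). lra. Qed.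

Lemma small_pow t : 0 < t -> exists n, (/2)^n < t.
Proof.
  intro ht. destruct (INR_unbounded (/t)) as [n hn].
  exists n. rewrite pow_inv. 
  assert (h2 : INR (S n) <= 2^n) by apply two_pow_ge.
  rewrite S_INR in h2.
  assert (0 < 2^n) by (apply pow_lt; lra).
  apply Rmult_lt_reg_l with (2^n). lra. rewrite Rinv_r by lra.
  assert (/ t * t = 1) by (field; lra).
  assert (0 <= INR n) by apply pos_INR. nra.
Qed.

Lemma find_level t : 0 < t <= 1 -> exists j, (/2)^(S j) < t <= (/2)^j.
Proof.
  intros [h1 h2]. destruct (small_pow t h1) as [n hn].
  destruct (level_exists n 0 t) as [i [_ hi]]. simpl. split. exact hn. exact h2.
  exists i. exact hi.
Qed.

Lemma half_anti a b : (a <= b)%nat -> (/2)^b <= (/2)^a.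
Proof.
  intro h. replace b with (a + (b - a))%nat by lia. rewrite pow_add.
  pose proof (half_pos a). assert ((/2)^(b-a) <= 1).
  { rewrite pow_inv. rewrite <- Rinv_1. apply Rinv_le_contravar. lra. apply pow_R1_Rle. lra. }
  pose proof (half_pos (b-a)). nra.
Qed.

Definition Cst (x d : R) (M N0 : nat) : R :=
  exp (ln 2 + (1 + INR (N0 + 1) / INR M) * ln (/x) + d * ln 4).

Lemma piece_adm (l : R -> Prop) (h01 : forall y, l y -> 0 <= y <= 1) (x d : R) (M N0 : nat) :
  0 < x <= 1 -> 0 < d -> ln (1 + 2*x) <= d * ln 2 / 2 -> (0 < M)%nat ->
  ln (/x) / INR M <= d * ln 2 / 2 -> assouad_admissible (piece l M N0) d.
Proof.
  intros hx hd h1 hM h2. split. lra.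
  exists (Cst x d M N0).
  assert (hxi : 1 <= /x). { rewrite <- Rinv_1. apply Rinv_le_contravar; lra. }
  assert (hMp : 0 < INR M) by (apply lt_0_INR; lia).
  assert (hC : 1 <= Cst x d M N0).
  { unfold Cst. apply Rle_trans with (exp 0). rewrite exp_0; lra. apply exp_le_mono.
    pose proof (ln_ge0 2 ltac:(lra)). pose proof (ln_ge0 4 ltac:(lra)). pose proof (ln_ge0 (/x) hxi).
    assert (0 <= INR (N0 + 1) / INR M) by (unfold Rdiv; apply Rmult_le_pos; [apply pos_INR|left; apply Rinv_0_lt_compat; lra]).
    assert (0 <= (1 + INR (N0 + 1) / INR M) * ln (/ x)) by (apply Rmult_le_pos; lra).
    assert (0 <= d * ln 4) by (apply Rmult_le_pos; lra). lra. }
  split. lra.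
  intros a r R ha hr hrR.
  assert (hRp : 1 <= Rpower (R / r) d).
  { unfold Rpower. apply Rle_trans with (exp 0). rewrite exp_0; lra. apply exp_le_mono. apply Rmult_le_pos. lra.
    apply ln_ge0. apply Rmult_le_reg_r with r. exact hr. field_simplify; lra. }
  destruct (Rle_dec 1 r) as [hr1|hr1].
  - exists 1%nat. split.
    + exists [0]. split. reflexivity. intros y [[hy _] _]. exists 0. split. simpl; auto.
      pose proof (h01 y hy). lra.
    + simpl. nra.
  - set (t := Rmin R 1).
    assert (ht : r < t <= 1). { unfold t. split. apply Rmin_glb_lt; lra. apply Rmin_r. }
    destruct (find_level t ltac:(lra)) as [j hj].
    destruct (find_level r ltac:(lra)) as [k0 hk0].
    assert (hjk : (j <= k0)%nat).
    { destruct (Nat.le_gt_cases j k0) as [h|h]. exact h. exfalso.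
      pose proof (half_anti (S k0) j ltac:(lia)). lra. }
    set (n := (S k0 - j)%nat).
    set (b := S ((n + N0 + 1) / M)).
    destruct (core l x hx n j b a (proj1 ha)) as [xs [Hxs Cxs]].
    exists (length xs). split.
    + exists xs. split. reflexivity.
      intros y [[hy hyp] hya].
      destruct (Cxs y hy) as [z [hz1 hz2]].
      * apply Rle_trans with t. unfold t. apply Rmin_glb. exact hya.
        pose proof (h01 y hy). pose proof (h01 a (proj1 ha)). apply Rabs_le. lra. apply hj.
      * set (c := cnt (W l y) (S j) (n + N0 + 1)).
        assert (hc1 : (cnt (W l y) j n <= 1 + c)%nat).
        { eapply Nat.le_trans. apply cnt_shift. apply le_n_S. apply cnt_mono. lia. }
        assert (hc2 : INR c <= / INR M * INR (n + N0 + 1)).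
        { pose proof (hyp (n + N0 + 1)%nat j ltac:(lia) ltac:(lia)) as H.
          rewrite countW_cnt in H. fold c in H.
          assert (0 < INR (n + N0 + 1)) by (apply lt_0_INR; lia).
          apply Rmult_le_reg_r with (/ INR (n + N0 + 1)). apply Rinv_0_lt_compat; lra.
          replace (/ INR M * INR (n + N0 + 1) * / INR (n + N0 + 1)) with (/ INR M) by (field; lra).
          exact H. }
        assert (hc3 : (M * c <= n + N0 + 1)%nat).
        { apply INR_le. rewrite mult_INR.
          apply Rmult_le_compat_l with (r := INR M) in hc2. 2: lra.
          replace (INR M * (/ INR M * INR (n + N0 + 1))) with (INR (n + N0 + 1)) in hc2 by (field; lra).
          exact hc2. }
        assert (hc4 : (c <= (n + N0 + 1) / M)%nat) by (apply Nat.div_le_lower_bound; lia).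
        unfold b. lia.
      * exists z. split. exact hz1.
        assert ((j + n)%nat = S k0) by (unfold n; lia).
        rewrite H in hz2. lra.
    + eapply Rle_trans. exact Hxs.
      apply fin_ineq; try assumption.
      *
        assert (E : (/2)^k0 = 2 * ((/2)^j * (/2)^n)).
        { rewrite <- pow_add. replace (j + n)%nat with (S k0) by (unfold n; lia). simpl. field. }
        assert (E2 : 2^n * (/2)^n = 1). { rewrite <- Rpow_mult_distr. replace (2 * /2) with 1 by field. apply pow1. }
        assert (tR : t <= R) by apply Rmin_l.
        assert (E3 : (/2)^j = 2 * (/2)^(S j)) by (simpl; field).
        assert (0 < 2^n) by (apply pow_lt; lra).
        assert (r <= 2 * ((/2)^j * (/2)^n)) by lra.
        assert (2^n * r <= 2^n * (2 * ((/2)^j * (/2)^n))) by (apply Rmult_le_compat_l; lra).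
        replace (2^n * (2 * ((/2)^j * (/2)^n))) with (2 * (/2)^j * (2^n * (/2)^n)) in H1 by ring.
        rewrite E2 in H1. lra.
      * unfold b. rewrite S_INR.
        pose proof (Nat.Private_NDivProp.mul_div_le (n + N0 + 1) M ltac:(lia)) as H.
        apply le_INR in H. rewrite mult_INR in H.
        assert (INR ((n + N0 + 1) / M) <= INR (n + N0 + 1) / INR M).
        { apply Rmult_le_reg_l with (INR M). exact hMp.
          replace (INR M * (INR (n + N0 + 1) / INR M)) with (INR (n + N0 + 1)) by (field; lra). exact H. }
        lra.
Qed.

Lemma dim_exists F d : assouad_admissible F d -> exists u, assouad_dim F u /\ u <= d.
Proof.
  intro hd.
  set (E := fun v => exists s, assouad_admissible F s /\ v = - s).
  assert (hb : bound E). { exists 0. intros v [s [hs ->]]. destruct hs. lra. }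
  assert (hne : exists v, E v) by (exists (-d); exists d; auto).
  destruct (completeness E hb hne) as [m [hm1 hm2]].
  exists (- m). split.
  - split.
    + intros s hs. assert (E (-s)) by (exists s; auto). specialize (hm1 _ H). lra.
    + intros m' hm'. assert (m <= - m'). { apply hm2. intros v [s [hs ->]]. specialize (hm' s hs). lra. } lra.
  - assert (E (-d)) by (exists d; auto). specialize (hm1 _ H). lra.
Qed.

Lemma dim_nonneg F u : assouad_dim F u -> 0 <= u.
Proof. intros [_ h]. apply h. intros s [hs _]. exact hs. Qed.

Lemma T_nonneg (Fi : nat -> R -> Prop) t :
  is_lub (fun u => exists i, assouad_dim (Fi i) u) t -> 0 <= t.
Proof.
  intros [h1 h2]. destruct (classic (exists u i, assouad_dim (Fi i) u)) as [[u [i hu]]|hn].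
  - pose proof (dim_nonneg _ _ hu). assert (u <= t) by (apply h1; exists i; auto). lra.
  - assert (t <= t - 1). { apply h2. intros u [i hu]. exfalso. apply hn. eauto. } lra.
Qed.

Lemma glb0 (S : R -> Prop) : (forall t, S t -> 0 <= t) ->
  (forall d, 0 < d -> exists t, S t /\ t <= d) -> is_glb S 0.
Proof.
  intros h1 h2. split. exact h1.
  intros m' hm'. destruct (Rle_dec m' 0) as [h|h]. exact h.
  destruct (h2 (m'/2) ltac:(lra)) as [t [ht1 ht2]]. specialize (hm' t ht1). lra.
Qed.

Lemma ln2_pos : 0 < ln 2.
Proof. rewrite <- ln_1. apply ln_increasing; lra. Qed.

Lemma part1 (l : R -> Prop) :
  (forall x, l x -> 0 <= x <= 1) ->
  (forall a, l a -> super_sparse_near l a) -> mod_assouad_dim l 0.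
Proof.
  intros h01 hss. apply glb0.
  - intros t [Fi [_ ht]]. exact (T_nonneg Fi t ht).
  - intros d hd.
    pose proof ln2_pos as hl2.
    set (x := Rmin 1 (d * ln 2 / 4)).
    assert (hx : 0 < x <= 1).
    { unfold x. split. apply Rmin_glb_lt. lra. apply Rmult_lt_0_compat. apply Rmult_lt_0_compat; lra. lra. apply Rmin_l. }
    assert (hx2 : x <= d * ln 2 / 4) by apply Rmin_r.
    assert (h1 : ln (1 + 2*x) <= d * ln 2 / 2). { pose proof (ln1p_le (2*x) ltac:(lra)). lra. }
    assert (hxi : 1 <= /x). { rewrite <- Rinv_1. apply Rinv_le_contravar; lra. }
    assert (hL : 0 <= ln (/x)) by (apply ln_ge0; lra).
    destruct (INR_unbounded (ln (/x) / (d * ln 2 / 2))) as [M0 hM0].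
    set (M := S M0).
    assert (hMp : 0 < INR M) by (apply lt_0_INR; unfold M; lia).
    assert (hMge : INR M0 <= INR M) by (apply le_INR; unfold M; lia).
    assert (h2 : ln (/x) / INR M <= d * ln 2 / 2).
    { assert (hp : 0 < d * ln 2 / 2) by (apply Rmult_lt_0_compat; [apply Rmult_lt_0_compat|]; lra).
      apply Rmult_le_reg_r with (INR M). exact hMp.
      replace (ln (/x) / INR M * INR M) with (ln (/x)) by (field; lra).
      apply Rmult_lt_compat_l with (r := d * ln 2 / 2) in hM0. 2: exact hp.
      replace (d * ln 2 / 2 * (ln (/ x) / (d * ln 2 / 2))) with (ln (/x)) in hM0 by (field; lra).
      nra. }
    set (Fi := fun N0 => piece l M N0).
    assert (adm : forall i, assouad_admissible (Fi i) d).
    { intro i. apply (piece_adm l h01 x d M i hx hd h1 ltac:(unfold M; lia) h2). }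
    set (S := fun u => exists i, assouad_dim (Fi i) u).
    assert (hb : bound S).
    { exists d. intros u [i hu]. destruct hu as [hu _].
      exact (hu d (adm i)). }
    assert (hne : exists u, S u).
    { destruct (dim_exists _ _ (adm 0%nat)) as [u [hu _]]. exists u, 0%nat. exact hu. }
    destruct (completeness S hb hne) as [t [ht1 ht2]].
    exists t. split.
    + exists Fi. split.
      * intros a ha. destruct (hss a ha (/ INR M) ltac:(apply Rinv_0_lt_compat; lra)) as [N0 hN0].
        exists N0. split. exact ha. exact hN0.
      * split; assumption.
    + apply ht2. intros u [i hu]. destruct hu as [hu _]. exact (hu d (adm i)).
Qed.

Lemma single_adm c : assouad_admissible (fun y => y = c) 0.
Proof.
  split. lra. exists 1. split. lra. intros x r R hx hr hrR. exists 1%nat. split.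
    - exists (c :: nil). split. reflexivity. intros y [hy _]. exists c. split. simpl; auto. lra.
    - rewrite Rpower_O. simpl; lra. apply Rdiv_lt_0_compat; lra.
Qed.

Lemma single_dim c : assouad_dim (fun y => y = c) 0.
Proof.
  pose proof (single_adm c) as h0.
  split.
  - intros s [hs _]. exact hs.
  - intros m' hm'. exact (hm' 0 h0).
Qed.

Definition pt (i : nat) : R := match i with O => 0 | _ => (/2)^i end.

Lemma part2a : mod_assouad_dim dyadic_set 0.
Proof.
  apply glb0.
  - intros t [Fi [_ ht]]. exact (T_nonneg Fi t ht).
  - intros d hd. exists 0. split; [|lra].
    exists (fun i y => y = pt i). split.
    + intros x [hx | [k [hk hx]]].
      * exists 0%nat. simpl. exact hx.
      * exists k. destruct k. lia. simpl pt. exact hx.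
    + split.
      * intros u [i hu]. destruct hu as [hu _]. apply hu. apply single_adm.
      * intros b hb. apply hb. exists 0%nat. apply single_dim.
Qed.

Lemma countW_dyadic N : countW (W dyadic_set 0) 0 N = INR N.
Proof.
  induction N as [|N IH]. reflexivity.
  simpl countW. rewrite IH. unfold Defs.ind.
  destruct (excluded_middle_informative _) as [h|h].
  - rewrite S_INR. lra.
  - exfalso. apply h. exists ((/2)^(S N)). split.
    + right. exists (S N). split. lia. reflexivity.
    + rewrite Rminus_0_r. rewrite Rabs_right. split. simpl. pose proof (half_pos N). simpl in H. 
      assert (0 < (/2)^N) by apply half_pos. simpl. nra. lra.
      left. apply half_pos.
Qed.

Lemma part2b : ~ sparse_near dyadic_set 0.
Proof.
  intro H. destruct (H (1/2) ltac:(lra)) as [N0 hN0].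
  specialize (hN0 (S N0) ltac:(lia) ltac:(lia)).
  rewrite countW_dyadic in hN0.
  assert (0 < INR (S N0)) by (apply lt_0_INR; lia).
  replace (INR (S N0) / INR (S N0)) with 1 in hN0 by (field; lra). lra.
Qed.

Theorem proposition4p4 :
  (forall l : R -> Prop,
     compact l ->
     (forall x, l x -> 0 <= x <= 1) ->
     (forall a, l a -> super_sparse_near l a) ->
     mod_assouad_dim l 0) /\
  (mod_assouad_dim dyadic_set 0 /\ ~ sparse_near dyadic_set 0).
Proof.
  split.
  - intros l _ h01 hss. exact (part1 l h01 hss).
  - split. exact part2a. exact part2b.
Qed.
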